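(* Let $\mathcal H_A,\mathcal H_B$ be finite-dimensional Hilbert spaces and $U$ a unitary on $\mathcal H_A\otimes\mathcal H_B$. Then $U$ is a generalized thermal unitary if and only if there exist full-rank density operators $\alpha$ on $\mathcal H_A$ and $\beta$ on $\mathcal H_B$, not both maximally mixed, and density operators $\alpha'$ on $\mathcal H_A$, $\beta'$ on $\mathcal H_B$, such that $U(\alpha\otimes\beta)U^\dagger=\alpha'\otimes\beta'$.
   Context: A unitary $U$ on $\mathcal H_A\otimes\mathcal H_B$ is a generalized thermal unitary if there exist Hermitian operators $H_A,H_A'$ on $\mathcal H_A$ and $H_B,H_B'$ on $\mathcal H_B$, with at least one of $H_A,H_B$ not proportional to the identity, such that $U(H_A\otimes\mathbb 1+\mathbb 1\otimes H_B)U^\dagger=H_A'\otimes\mathbb 1+\mathbb 1\otimes H_B'$. *)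

(* Defs.v *)
From HB Require Import structures.
From mathcomp Require Import all_boot all_order all_algebra.
From mathcomp Require Import complex mxtens.
From mathcomp Require Import reals.

Set Implicit Arguments.
Unset Strict Implicit.
Unset Printing Implicit Defensive.

Import Order.TTheory GRing.Theory Num.Theory.
Local Open Scope ring_scope.
Local Open Scope complex_scope.

(* The complex numbers: C = R[i] for an arbitrary realType R
   (every realType is a complete archimedean ordered field, i.e. a copy of ℝ). *)

Definition adjmx (C : numClosedFieldType) (m n : nat) (A : 'M[C]_(m, n)) : 'M[C]_(n, m) :=
  (map_mx Num.conj A)^T.

Definition hermitian (C : numClosedFieldType) (n : nat) (A : 'M[C]_n) : Prop :=
  adjmx A = A.

Definition unitary (C : numClosedFieldType) (n : nat) (U : 'M[C]_n) : Prop :=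
  U *m adjmx U = 1%:M /\ adjmx U *m U = 1%:M.

Definition psd (C : numClosedFieldType) (n : nat) (A : 'M[C]_n) : Prop :=
  hermitian A /\ forall v : 'cV[C]_n, 0 <= (adjmx v *m A *m v) 0 0.

Definition density (C : numClosedFieldType) (n : nat) (A : 'M[C]_n) : Prop :=
  psd A /\ \tr A = 1.

Definition full_rank (C : numClosedFieldType) (n : nat) (A : 'M[C]_n) : Prop :=
  \rank A = n.

Definition maximally_mixed (C : numClosedFieldType) (n : nat) (A : 'M[C]_n) : Prop :=
  A = (n%:R)^-1%:M.

Definition prop_to_id (C : numClosedFieldType) (n : nat) (A : 'M[C]_n) : Prop :=
  exists c : C, A = c%:M.

(* generalized thermal unitary on C^m ⊗ C^n (tensor product = Kronecker product) *)
Definition gen_thermal_unitary (C : numClosedFieldType) (m n : nat)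
  (U : 'M[C]_(m * n)) : Prop :=
  exists (HA HA' : 'M[C]_m) (HB HB' : 'M[C]_n),
    hermitian HA /\ hermitian HA' /\ hermitian HB /\ hermitian HB' /\
    (~ prop_to_id HA \/ ~ prop_to_id HB) /\
    U *m (HA *t (1%:M : 'M[C]_n) + (1%:M : 'M[C]_m) *t HB) *m adjmx U
      = HA' *t (1%:M : 'M[C]_n) + (1%:M : 'M[C]_m) *t HB'.

(* Main.v *)
Require Import Defs.
From HB Require Import structures.
From mathcomp Require Import all_boot all_order all_algebra.
From mathcomp Require Import complex mxtens.
From mathcomp Require Import reals.
From mathcomp Require Import sesquilinear spectral.
From mathcomp Require Import sequences exp.

Import Order.TTheory GRing.Theory Num.Theory.
Local Open Scope ring_scope.
Local Open Scope complex_scope.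

Set Implicit Arguments.
Unset Strict Implicit.
Unset Printing Implicit Defensive.

Section Gen.
Variable C : numClosedFieldType.

Definition fc n (P : 'M[C]_n) (d : 'rV[C]_n) : 'M[C]_n := adjmx P *m diag_mx d *m P.

Lemma adjmxM m n p (A : 'M[C]_(m, n)) (B : 'M[C]_(n, p)) :
  adjmx (A *m B) = adjmx B *m adjmx A.
Proof. by rewrite /adjmx map_mxM trmx_mul. Qed.

Lemma adjmxK m n (A : 'M[C]_(m, n)) : adjmx (adjmx A) = A.
Proof. by apply/matrixP => i j; rewrite !mxE conjCK. Qed.

Lemma adjmx1 n : adjmx (1%:M : 'M[C]_n) = 1%:M.
Proof. by rewrite /adjmx map_mx1 trmx1. Qed.

Lemma adjmxD m n (A B : 'M[C]_(m, n)) : adjmx (A + B) = adjmx A + adjmx B.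
Proof. by apply/matrixP => i j; rewrite !mxE rmorphD. Qed.

Lemma adjmx_tens m n p q (A : 'M[C]_(m, n)) (B : 'M[C]_(p, q)) :
  adjmx (A *t B) = adjmx A *t adjmx B.
Proof. by apply/matrixP => i j; rewrite !mxE rmorphM. Qed.

Lemma adjmx_diag n (d : 'rV[C]_n) : adjmx (diag_mx d) = diag_mx (map_mx Num.conj d).
Proof.
apply/matrixP => i j; rewrite !mxE; case: (eqVneq i j) => [->|ne].
  by rewrite !mulr1n.
by rewrite !mulr0n rmorph0.
Qed.

Lemma adjmxE m n (A : 'M[C]_(m, n)) : adjmx A = map_mx Num.conj A^T.
Proof. by apply/matrixP => i j; rewrite !mxE. Qed.

Lemma herm_spec n (A : 'M[C]_n) : Defs.hermitian A ->
  exists (P : 'M[C]_n) (d : 'rV[C]_n), unitary P /\ (forall k, d 0 k \is Num.real) /\ A = fc P d.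
Proof.
move=> hA.
have hA' : A \is hermsymmx.
  by apply/is_hermitianmxP; rewrite expr0 scale1r -{1}hA adjmxE.
have Pu := spectral_unitarymx A.
have Pun := unitarymx_unit Pu.
have Hinv := invmx_unitary Pu.
exists (spectralmx A), (spectral_diag A); split; [|split].
- split.
    by move/unitarymxP: Pu; rewrite adjmxE.
  by rewrite adjmxE -Hinv mulVmx.
- by move=> k; move/mxOverP: (hermitian_spectral_diag_real hA'); apply.
- have E : A = invmx (spectralmx A) *m diag_mx (spectral_diag A) *m spectralmx A.
    exact/(orthomx_spectralP (A:=A))/hermitian_normalmx.
  rewrite {1}E.
  by rewrite /fc Hinv adjmxE.
Qed.

Lemma mulmxKU m n (P : 'M[C]_n) (A : 'M[C]_(m, n)) :
  adjmx P *m P = 1%:M -> A *m adjmx P *m P = A.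
Proof. by move=> H; rewrite -mulmxA H mulmx1. Qed.

Lemma mulmxUK m n (P : 'M[C]_n) (A : 'M[C]_(m, n)) :
  P *m adjmx P = 1%:M -> A *m P *m adjmx P = A.
Proof. by move=> H; rewrite -mulmxA H mulmx1. Qed.

Lemma diag_intertw n m (W : 'M[C]_(m, n)) (d : 'rV_n) (e : 'rV_m) (f : C -> C) :
  W *m diag_mx d = diag_mx e *m W ->
  W *m diag_mx (map_mx f d) = diag_mx (map_mx f e) *m W.
Proof.
move=> /matrixP H; apply/matrixP => i j; move: (H i j).
rewrite !mul_mx_diag !mul_diag_mx !mxE => Hij.
case: (eqVneq (W i j) 0) => [->|nz]; first by rewrite mulr0 mul0r.
have -> : d 0 j = e 0 i by apply: (mulfI nz); rewrite Hij mulrC.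
by rewrite mulrC.
Qed.

Lemma intertw n m (P : 'M[C]_n) (Q : 'M[C]_m) d e (V : 'M[C]_(m, n)) f :
  unitary P -> unitary Q -> V *m fc P d = fc Q e *m V ->
  V *m fc P (map_mx f d) = fc Q (map_mx f e) *m V.
Proof.
move=> [P1 P2] [Q1 Q2] H.
have HW : (Q *m V *m adjmx P) *m diag_mx d = diag_mx e *m (Q *m V *m adjmx P).
  have : Q *m (V *m fc P d) *m adjmx P = Q *m (fc Q e *m V) *m adjmx P by rewrite H.
  by rewrite /fc !mulmxA mulmxUK // Q1 mul1mx.
have HW' := diag_intertw f HW.
have -> : V *m fc P (map_mx f d) =
   adjmx Q *m ((Q *m V *m adjmx P) *m diag_mx (map_mx f d)) *m P.
  by rewrite /fc !mulmxA Q2 mul1mx.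
by rewrite HW' /fc !mulmxA mulmxKU.
Qed.

Definition dprod m n (d : 'rV[C]_m) (e : 'rV[C]_n) : 'rV[C]_(m * n) :=
  \row_k (d 0 (mxtens_unindex k).1 * e 0 (mxtens_unindex k).2).

Lemma dprodE m n (d : 'rV[C]_m) (e : 'rV[C]_n) i j :
  dprod d e 0 (mxtens_index (i, j)) = d 0 i * e 0 j.
Proof. by rewrite mxE mxtens_indexK. Qed.

Lemma diag_tens m n (d : 'rV[C]_m) (e : 'rV[C]_n) :
  diag_mx d *t diag_mx e = diag_mx (dprod d e).
Proof.
apply/matrixP => k l; case: (mxtens_indexP k) => i j; case: (mxtens_indexP l) => i' j'.
rewrite tensmxE [in RHS]mxE dprodE (inj_eq (can_inj (@mxtens_indexK m n))) xpair_eqE !mxE.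
by case: (i == i'); case: (j == j'); rewrite /= ?mulr1n ?mulr0n ?mulr0 ?mul0r.
Qed.

Lemma fc_tens m n (P : 'M[C]_m) (Q : 'M[C]_n) d e :
  fc P d *t fc Q e = fc (P *t Q) (dprod d e).
Proof. by rewrite /fc -!tensmx_mul adjmx_tens diag_tens. Qed.

Lemma tens11 m n : (1%:M : 'M[C]_m) *t (1%:M : 'M[C]_n) = 1%:M.
Proof.
rewrite -!diag_const_mx diag_tens; congr diag_mx; apply/matrixP => i k.
by rewrite !mxE mulr1.
Qed.

Lemma unitary_tens m n (P : 'M[C]_m) (Q : 'M[C]_n) :
  unitary P -> unitary Q -> unitary (P *t Q).
Proof.
move=> [P1 P2] [Q1 Q2].
by rewrite /unitary adjmx_tens !tensmx_mul P1 P2 Q1 Q2 tens11.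
Qed.

Lemma fc1 n (Q : 'M[C]_n) : unitary Q -> fc Q (const_mx 1) = 1%:M.
Proof. by move=> [Q1 Q2]; rewrite /fc diag_const_mx mulmx1 Q2. Qed.

Lemma fc_sum m n (P : 'M[C]_m) (Q : 'M[C]_n) d e :
  unitary P -> unitary Q ->
  fc P d *t 1%:M + 1%:M *t fc Q e =
  fc (P *t Q) (dprod d (const_mx 1) + dprod (const_mx 1) e).
Proof.
move=> uP uQ; rewrite -{1}(fc1 uQ) -(fc1 uP) !fc_tens /fc.
by rewrite linearD /= mulmxDr mulmxDl.
Qed.

Lemma fc_conj n (P : 'M[C]_n) (d : 'rV[C]_n) : unitary P -> P *m fc P d *m adjmx P = diag_mx d.
Proof. by move=> [P1 P2]; rewrite /fc !mulmxA P1 mul1mx mulmxUK. Qed.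

Lemma fc_scalar n (P : 'M[C]_n) (d : 'rV[C]_n) (c : C) : unitary P ->
  fc P d = c%:M -> forall k, d 0 k = c.
Proof.
move=> uP H k; have := fc_conj d uP; rewrite H mul_mx_scalar -scalemxAl.
case: uP => P1 _; rewrite P1 scalemx1 => /matrixP /(_ k k).
by rewrite !mxE eqxx !mulr1n.
Qed.

Lemma fc_const n (P : 'M[C]_n) (d : 'rV[C]_n) (c : C) : unitary P ->
  (forall k, d 0 k = c) -> fc P d = c%:M.
Proof.
move=> [P1 P2] H; have -> : d = const_mx c by apply/matrixP => i k; rewrite ord1 H mxE.
by rewrite /fc diag_const_mx mul_mx_scalar -scalemxAl P2 scalemx1.
Qed.

Lemma fc_tr n (P : 'M[C]_n) (d : 'rV[C]_n) : unitary P -> \tr (fc P d) = \sum_k d 0 k.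
Proof.
move=> [P1 P2]; rewrite /fc mxtrace_mulC mulmxA P1 mul1mx.
by rewrite /mxtrace; apply: eq_bigr => i _; rewrite mxE eqxx mulr1n.
Qed.

Lemma sum_dprod m n (d : 'rV[C]_m) (e : 'rV[C]_n) :
  \sum_k dprod d e 0 k = (\sum_k d 0 k) * (\sum_k e 0 k).
Proof. by rewrite mulr_sum; apply: eq_bigr => k _; rewrite mxE. Qed.

Lemma fc_herm n (P : 'M[C]_n) (d : 'rV[C]_n) :
  (forall k, Num.conj (d 0 k) = d 0 k) -> Defs.hermitian (fc P d).
Proof.
move=> H; rewrite /Defs.hermitian /fc !adjmxM adjmxK adjmx_diag mulmxA.
congr (_ *m diag_mx _ *m _); by apply/matrixP => i k; rewrite mxE ord1 H.
Qed.

Lemma fc_psd n (P : 'M[C]_n) (d : 'rV[C]_n) :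
  (forall k, 0 <= d 0 k) -> psd (fc P d).
Proof.
move=> H; split.
  by apply: fc_herm => k; apply/conj_Creal/ger0_real.
move=> v.
have -> : adjmx v *m fc P d *m v = adjmx (P *m v) *m diag_mx d *m (P *m v).
  by rewrite /fc adjmxM !mulmxA.
rewrite mxE; apply: sumr_ge0 => k _.
rewrite mul_mx_diag !mxE mulrAC mulrC; apply: mulr_ge0 => //.
by rewrite mulrC mul_conjC_ge0.
Qed.

Lemma unitary_unit n (P : 'M[C]_n) : unitary P -> P \in unitmx.
Proof. by case=> P1 _; case: (mulmx1_unit P1). Qed.

Lemma adj_unit n (P : 'M[C]_n) : unitary P -> adjmx P \in unitmx.
Proof. by case=> P1 _; case: (mulmx1_unit P1). Qed.

Lemma fc_unit n (P : 'M[C]_n) (d : 'rV[C]_n) : unitary P ->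
  fc P d \in unitmx -> forall k, d 0 k != 0.
Proof.
move=> uP H k; have := fc_conj d uP => E.
have : diag_mx d \in unitmx.
  by rewrite -E unitmx_mul (unitmx_mul P) H adj_unit // unitary_unit.
by rewrite unitmxE unitfE det_diag => /prodf_neq0; apply.
Qed.

Lemma fc_unit' n (P : 'M[C]_n) (d : 'rV[C]_n) : unitary P ->
  (forall k, d 0 k != 0) -> fc P d \in unitmx.
Proof.
move=> uP H; rewrite /fc !unitmx_mul (unitary_unit uP) (adj_unit uP) /=.
rewrite andbT unitmxE unitfE det_diag.
by apply/prodf_neq0 => k _; apply: H.
Qed.

Lemma psd_spec n (A : 'M[C]_n) : psd A ->
  exists (P : 'M[C]_n) (d : 'rV[C]_n),
    unitary P /\ (forall k, 0 <= d 0 k) /\ A = fc P d.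
Proof.
move=> [hA pA]; have [P [d [uP [_ E]]]] := herm_spec hA.
exists P, d; split => //; split => // k.
have := pA (adjmx P *m delta_mx k (0 : 'I_1)).
have -> : adjmx (adjmx P *m delta_mx k (0 : 'I_1)) *m A *m (adjmx P *m delta_mx k (0 : 'I_1))
   = delta_mx (0 : 'I_1) k *m diag_mx d *m delta_mx k (0 : 'I_1).
  case: uP => P1 P2.
  rewrite E /fc adjmxM adjmxK !mulmxA -!(mulmxA _ P (adjmx P)) P1 !mulmx1.
  congr (_ *m _ *m _); apply/matrixP => i j; rewrite !mxE.
  by case: (i == 0); case: (j == k); rewrite ?rmorph0 ?rmorph1.
by rewrite -rowE row_diag_mx -scalemxAl mul_delta_mx !mxE !eqxx mulr1.
Qed.

Lemma mm_of_const n (P : 'M[C]_n) (d : 'rV[C]_n) (c : C) : unitary P ->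
  (forall k, d 0 k = c) -> \tr (fc P d) = 1 -> maximally_mixed (fc P d).
Proof.
move=> uP H htr; have E := fc_const uP H; rewrite /maximally_mixed E.
move: htr; rewrite E mxtrace_scalar => hc.
have nz : (n%:R : C) != 0.
  rewrite pnatr_eq0; apply/negP => /eqP n0; move: hc; rewrite n0 mulr0n => /eqP.
  by rewrite eq_sym oner_eq0.
by congr (_%:M); apply: (mulIf nz); rewrite mulr_natr hc mulVf.
Qed.

Lemma sum_pos k (d : 'rV[C]_k) : (0 < k)%N -> (forall i, 0 < d 0 i) ->
  0 < \sum_i d 0 i.
Proof.
case: k d => // k d _ H; rewrite big_ord_recl; apply: (lt_le_trans (H ord0)).
by rewrite lerDl; apply: sumr_ge0 => i _; apply: ltW.
Qed.

Lemma norm_dens k (P : 'M[C]_k) (d : 'rV[C]_k) : (0 < k)%N -> unitary P ->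
  (forall i, 0 < d 0 i) ->
  density (fc P ((\sum_i d 0 i)^-1 *: d)) /\ full_rank (fc P ((\sum_i d 0 i)^-1 *: d)).
Proof.
move=> Hk uP H; have zpos := sum_pos Hk H.
have znz : \sum_i d 0 i != 0 by rewrite gt_eqF.
split; [split|].
- apply: fc_psd => i; rewrite mxE; apply: mulr_ge0; last exact: ltW.
  by rewrite invr_ge0 ltW.
- rewrite fc_tr //; under eq_bigr do rewrite mxE.
  by rewrite -mulr_sumr mulVf.
- apply: mxrank_unit; apply: fc_unit' => // i.
  by rewrite mxE mulf_neq0 // ?invr_eq0 // gt_eqF.
Qed.

Lemma fcZ k (P : 'M[C]_k) (d : 'rV[C]_k) (c : C) : fc P (c *: d) = c *: fc P d.
Proof. by rewrite /fc linearZ /= -scalemxAr -scalemxAl. Qed.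

Lemma dprodZ m n (d : 'rV[C]_m) (e : 'rV[C]_n) (c c' : C) :
  dprod (c *: d) (c' *: e) = (c * c') *: dprod d e.
Proof. by apply/matrixP => i k; rewrite !mxE mulrACA. Qed.

Lemma tr_conj k (U : 'M[C]_k) (X : 'M[C]_k) : unitary U -> \tr (U *m X *m adjmx U) = \tr X.
Proof. by case=> _ U2; rewrite mxtrace_mulC mulmxA U2 mul1mx. Qed.
End Gen.

Section Main.
Variable R : realType.
Local Notation C := (R[i]).

Definition fE (z : C) : C := (expR (complex.Re z))%:C.
Definition fL (z : C) : C := (ln (complex.Re z))%:C.

Lemma realC_Im (x : C) : x \is Num.real -> complex.Im x = 0.
Proof.
case: x => a b; rewrite realE !lecE /=.
by case/orP => /andP [/eqP H _].
Qed.

Lemma realC_re (r : R) : (r%:C : C) \is Num.real.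
Proof. by rewrite realE !lecE /= eqxx /= le_total. Qed.

Lemma realC_eq (x y : C) : x \is Num.real -> y \is Num.real ->
  complex.Re x = complex.Re y -> x = y.
Proof.
move=> /realC_Im hx /realC_Im hy; case: x hx => a b /= ->.
by case: y hy => c d /= -> ->.
Qed.

Lemma fE_add x y : fE (x + y) = fE x * fE y.
Proof. by rewrite /fE raddfD /= expRD rmorphM. Qed.

Lemma fE_gt0 x : 0 < fE x.
Proof. by rewrite /fE ltcE /= eqxx expR_gt0. Qed.

Lemma fE_real x : Num.conj (fE x) = fE x.
Proof. by apply: conj_Creal; apply: realC_re. Qed.

Lemma fL_real x : Num.conj (fL x) = fL x.
Proof. by apply: conj_Creal; apply: realC_re. Qed.

Lemma pos_re (x : C) : 0 < x -> 0 < complex.Re x /\ x = (complex.Re x)%:C.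
Proof. by case: x => a b; rewrite ltcE /= => /andP [/eqP -> ha]; split. Qed.

Lemma fL_mul x y : 0 < x -> 0 < y -> fL (x * y) = fL x + fL y.
Proof.
move=> /pos_re [ha ->] /pos_re [hb ->].
by rewrite /fL -(rmorphM (real_complex R)) /= lnM ?posrE // rmorphD.
Qed.

Lemma prop_mm k (P : 'M[C]_k) (d : 'rV[C]_k) : unitary P ->
  (forall i, 0 < d 0 i) -> \tr (fc P d) = 1 ->
  prop_to_id (fc P (map_mx fL d)) -> maximally_mixed (fc P d).
Proof.
move=> uP H htr [c Ec]; have Hc := fc_scalar uP Ec.
apply: (mm_of_const (c := (expR (complex.Re c))%:C)) => // i.
have := Hc i; rewrite mxE /fL => <- /=.
have [hp ->] := pos_re (H i).
by rewrite /= lnK // posrE.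
Qed.

Lemma prop_of_mm k (P : 'M[C]_k) (d : 'rV[C]_k) (z c : C) : unitary P ->
  (forall i, d 0 i \is Num.real) -> z != 0 ->
  fc P (z *: map_mx fE d) = c%:M -> prop_to_id (fc P d).
Proof.
move=> uP hr zn E; have H := fc_scalar uP E.
exists (ln (complex.Re (c / z)))%:C; apply: fc_const => // i.
have := H i; rewrite !mxE => Hc.
have : fE (d 0 i) = c / z by rewrite -Hc mulrC mulKf.
rewrite /fE => /(congr1 (@complex.Re R)) /= /(congr1 (@ln R)); rewrite expRK => <-.
by apply: realC_eq => //; apply: realC_re.
Qed.


Lemma dir2 m n (Hm : (0 < m)%N) (Hn : (0 < n)%N) (U : 'M[C]_(m * n))
  (HU : unitary U) (al al' : 'M[C]_m) (be be' : 'M[C]_n) :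
  density al -> full_rank al -> density be -> full_rank be ->
  ~ (maximally_mixed al /\ maximally_mixed be) ->
  density al' -> density be' ->
  U *m (al *t be) *m adjmx U = al' *t be' -> gen_thermal_unitary U.
Proof.
move=> [pA trA] fA [pB trB] fB nmm [pA' trA'] [pB' trB'] Heq.
have [U1 U2] := HU.
have [Pa [a [uPa [a0 Ea]]]] := psd_spec pA.
have [Pb [b [uPb [b0 Eb]]]] := psd_spec pB.
have [Pa' [a' [uPa' [a0' Ea']]]] := psd_spec pA'.
have [Pb' [b' [uPb' [b0' Eb']]]] := psd_spec pB'.
have unA : al \in unitmx by rewrite -row_full_unit /row_full fA.
have unB : be \in unitmx by rewrite -row_full_unit /row_full fB.
have unAB' : al' *t be' \in unitmx.
  have := tensmx_unit (lt0n_neq0 Hm) (lt0n_neq0 Hn) unA unB => uAB.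
  by rewrite -Heq unitmx_mul (unitmx_mul U) (unitary_unit HU) (adj_unit HU) uAB.
have Hd' := @fc_unit _ _ (Pa' *t Pb') (dprod a' b') (unitary_tens uPa' uPb').
rewrite -fc_tens -Ea' -Eb' in Hd'; have {}Hd' := Hd' unAB'.
have apos : forall k, 0 < a 0 k.
  move=> k; rewrite lt0r a0 andbT.
  by have := @fc_unit _ _ Pa a uPa; rewrite -Ea => /(_ unA); apply.
have bpos : forall k, 0 < b 0 k.
  move=> k; rewrite lt0r b0 andbT.
  by have := @fc_unit _ _ Pb b uPb; rewrite -Eb => /(_ unB); apply.
have apos' : forall k, 0 < a' 0 k.
  move=> k; rewrite lt0r a0' andbT.
  by have := Hd' (mxtens_index (k, Ordinal Hn)); rewrite dprodE mulf_eq0 negb_or => /andP [].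
have bpos' : forall k, 0 < b' 0 k.
  move=> k; rewrite lt0r b0' andbT.
  by have := Hd' (mxtens_index (Ordinal Hm, k)); rewrite dprodE mulf_eq0 negb_or => /andP [].
have key : U *m fc (Pa *t Pb) (dprod a b) = fc (Pa' *t Pb') (dprod a' b') *m U.
  by rewrite -!fc_tens -Ea -Eb -Ea' -Eb' -Heq mulmxKU.
have key2 := intertw fL (unitary_tens uPa uPb) (unitary_tens uPa' uPb') key.
have split_gen : forall p q (x : 'rV[C]_p) (y : 'rV[C]_q),
    (forall i, 0 < x 0 i) -> (forall i, 0 < y 0 i) ->
    map_mx fL (dprod x y) =
    dprod (map_mx fL x) (const_mx 1) + dprod (const_mx 1) (map_mx fL y).
  move=> p q x y hx hy; apply/matrixP => i k; rewrite ord1.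
  case: (mxtens_indexP k) => s t.
  by rewrite !mxE !mxtens_indexK mulr1 mul1r fL_mul.
rewrite (split_gen _ _ a b) // (split_gen _ _ a' b') // in key2.
rewrite -(fc_sum _ _ uPa uPb) -(fc_sum _ _ uPa' uPb') in key2.
exists (fc Pa (map_mx fL a)), (fc Pa' (map_mx fL a')),
       (fc Pb (map_mx fL b)), (fc Pb' (map_mx fL b')).
split; [|split; [|split; [|split; [|split]]]].
- by apply: fc_herm => k; rewrite mxE fL_real.
- by apply: fc_herm => k; rewrite mxE fL_real.
- by apply: fc_herm => k; rewrite mxE fL_real.
- by apply: fc_herm => k; rewrite mxE fL_real.
- case: (eqVneq al (m%:R^-1)%:M) => [mA|nmA].
    right => hb; apply: nmm; split => //.
    by rewrite Eb; apply: (prop_mm uPb bpos) => //; rewrite -Eb.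
  left => ha; move/eqP: nmA; apply.
  by rewrite Ea; apply: (prop_mm uPa apos) => //; rewrite -Ea.
- by rewrite key2 mulmxUK.
Qed.

Lemma dir1 m n (Hm : (0 < m)%N) (Hn : (0 < n)%N) (U : 'M[C]_(m * n))
  (HU : unitary U) : gen_thermal_unitary U ->
  exists (alpha alpha' : 'M[C]_m) (beta beta' : 'M[C]_n),
    density alpha /\ full_rank alpha /\ density beta /\ full_rank beta /\
    ~ (maximally_mixed alpha /\ maximally_mixed beta) /\
    density alpha' /\ density beta' /\
    U *m (alpha *t beta) *m adjmx U = alpha' *t beta'.
Proof.
move=> [HA [HA' [HB [HB' [hA [hA' [hB [hB' [nprop Heq]]]]]]]]].
have [U1 U2] := HU.
have [Pa [a [uPa [ra Ea]]]] := herm_spec hA.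
have [Pb [b [uPb [rb Eb]]]] := herm_spec hB.
have [Pa' [a' [uPa' [ra' Ea']]]] := herm_spec hA'.
have [Pb' [b' [uPb' [rb' Eb']]]] := herm_spec hB'.
have key : U *m fc (Pa *t Pb) (dprod a (const_mx 1) + dprod (const_mx 1) b)
   = fc (Pa' *t Pb') (dprod a' (const_mx 1) + dprod (const_mx 1) b') *m U.
  rewrite -(fc_sum _ _ uPa uPb) -(fc_sum _ _ uPa' uPb') -Ea -Eb -Ea' -Eb'.
  by rewrite -Heq mulmxKU.
have key2 := intertw fE (unitary_tens uPa uPb) (unitary_tens uPa' uPb') key.
have split_gen : forall p q (x : 'rV[C]_p) (y : 'rV[C]_q),
    map_mx fE (dprod x (const_mx 1) + dprod (const_mx 1) y) =
    dprod (map_mx fE x) (map_mx fE y).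
  move=> p q x y; apply/matrixP => i k; rewrite ord1.
  case: (mxtens_indexP k) => s t.
  by rewrite !mxE !mxtens_indexK mulr1 mul1r fE_add.
rewrite !split_gen -!fc_tens in key2.
have pos : forall p (x : 'rV[C]_p) i, 0 < map_mx fE x 0 i.
  by move=> p x i; rewrite mxE fE_gt0.
have [dA fA] := norm_dens Hm uPa (pos _ a).
have [dB fB] := norm_dens Hn uPb (pos _ b).
have [dA' fA'] := norm_dens Hm uPa' (pos _ a').
have [dB' fB'] := norm_dens Hn uPb' (pos _ b').
have znz : forall p (x : 'rV[C]_p), (0 < p)%N -> \sum_i map_mx fE x 0 i != 0.
  by move=> p x hp; rewrite gt_eqF // sum_pos.
exists (fc Pa ((\sum_i (map_mx fE a) 0 i)^-1 *: (map_mx fE a))), (fc Pa' ((\sum_i (map_mx fE a') 0 i)^-1 *: (map_mx fE a'))),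
       (fc Pb ((\sum_i (map_mx fE b) 0 i)^-1 *: (map_mx fE b))), (fc Pb' ((\sum_i (map_mx fE b') 0 i)^-1 *: (map_mx fE b'))).
split; first exact: dA. split; first exact: fA.
split; first exact: dB. split; first exact: fB.
split; last first.
  split; first exact: dA'. split; first exact: dB'.
  rewrite !fc_tens !dprodZ !fcZ -!fc_tens -scalemxAr -scalemxAl key2 mulmxUK //.
  congr (_ *: _); rewrite -!invfM; congr (GRing.inv _).
  have tAB : \tr (fc Pa (map_mx fE a) *t fc Pb (map_mx fE b)) = (\sum_i (map_mx fE a) 0 i) * (\sum_i (map_mx fE b) 0 i).
    rewrite fc_tens fc_tr; last exact: unitary_tens uPa uPb.
    exact: sum_dprod.
  have tAB' : \tr (fc Pa' (map_mx fE a') *t fc Pb' (map_mx fE b')) = (\sum_i (map_mx fE a') 0 i) * (\sum_i (map_mx fE b') 0 i).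
    rewrite fc_tens fc_tr; last exact: unitary_tens uPa' uPb'.
    exact: sum_dprod.
  by rewrite -tAB -tAB' -(tr_conj (fc Pa (map_mx fE a) *t fc Pb (map_mx fE b)) HU) key2 mulmxUK.
move=> [mA mB]; case: nprop => [nA|nB].
  apply: nA; rewrite Ea; apply: (prop_of_mm uPa ra (invr_neq0 (znz _ a Hm))); exact: mA.
apply: nB; rewrite Eb; apply: (prop_of_mm uPb rb (invr_neq0 (znz _ b Hn))); exact: mB.
Qed.

Theorem main m n (Hm : (0 < m)%N) (Hn : (0 < n)%N)
  (U : 'M[C]_(m * n)) (HU : unitary U) :
  gen_thermal_unitary U <->
  exists (alpha alpha' : 'M[C]_m) (beta beta' : 'M[C]_n),
    density alpha /\ full_rank alpha /\ density beta /\ full_rank beta /\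
    ~ (maximally_mixed alpha /\ maximally_mixed beta) /\
    density alpha' /\ density beta' /\
    U *m (alpha *t beta) *m adjmx U = alpha' *t beta'.
Proof.
split; first exact: dir1.
move=> [al [al' [be [be' [dA [fA [dB [fB [nmm [dA' [dB' Heq]]]]]]]]]]].
exact: (dir2 Hm Hn HU dA fA dB fB nmm dA' dB' Heq).
Qed.
End Main.

Theorem theorem1 (R : realType) (m n : nat) (Hm : (0 < m)%N) (Hn : (0 < n)%N)
  (U : 'M[R[i]]_(m * n)) (HU : unitary U) :
  gen_thermal_unitary U <->
  exists (alpha alpha' : 'M[R[i]]_m) (beta beta' : 'M[R[i]]_n),
    density alpha /\ full_rank alpha /\ density beta /\ full_rank beta /\
    ~ (maximally_mixed alpha /\ maximally_mixed beta) /\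
    density alpha' /\ density beta' /\
    U *m (alpha *t beta) *m adjmx U = alpha' *t beta'.
Proof. exact: main. Qed.
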